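(* Let $D$ be an integral domain and $D\subseteq T\subseteq S$ overrings of $D$. (b) Let $\star,\star',\star''$ be semistar operations on $D,T,S$ respectively. If $S$ is $(\star',\star'')$-flat over $T$ and $T$ is $(\star,\star')$-flat over $D$, then $S$ is $(\star,\star'')$-flat over $D$. (e) Let $\star_1,\star_2$ be semistar operations on $D$ with $(\star_1)_f\le(\star_2)_f$ and $\star'$ a semistar operation on $T$. If $T$ is $(\star_2,\star')$-flat over $D$, then $T$ is $(\star_1,\star')$-flat over $D$. In particular, if $\star$ is a semistar operation on $D$ with $D^\star=D$, then $T$ is $t$-flat over $(D,\star)$ if and only if $T$ is $t$-flat over $D$. (h) Let $\star,\star',\star''$ be semistar operations on $D,T,S$ respectively, and assume $S$ is $(\star,\star'')$-flat over $D$. Then $S$ is $(\star',\star'')$-flat over $T$ if and only if $S$ is $(\star',\star'')$-linked to $T$.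
   Context: Let $D$ be an integral domain with quotient field $K$. $\overline{\mathbf F}(D)$ denotes the set of all nonzero $D$-submodules of $K$ and $\mathbf f(D)$ the set of nonzero finitely generated $D$-submodules of $K$. A semistar operation on $D$ is a map $\star:\overline{\mathbf F}(D)\to\overline{\mathbf F}(D)$, $E\mapsto E^\star$, such that for all $0\ne x\in K$ and $E,F\in\overline{\mathbf F}(D)$: (1) $(xE)^\star=xE^\star$; (2) $E\subseteq F\Rightarrow E^\star\subseteq F^\star$; (3) $E\subseteq E^\star$ and $(E^\star)^\star=E^\star$. $\star_1\le\star_2$ means $E^{\star_1}\subseteq E^{\star_2}$ for all $E$. $\star_f$ is defined by $E^{\star_f}=\bigcup\{F^\star:F\in\mathbf f(D),F\subseteq E\}$. A nonzero ideal $I$ of $D$ is a quasi-$\star$-ideal if $I^\star\cap D=I$; a quasi-$\star$-prime is a prime quasi-$\star$-ideal. An overring of $D$ is a ring $T$ with $D\subseteq T\subseteq K$; all notions are defined analogously on $T$ (and on overrings of $T$ relative to $T$). For an overring $T$, $v_T$ is $E\mapsto(T:_K(T:_KE))$ and $t_T:=(v_T)_f$. $T$ is $(\star,\star')$-linked to $D$ if for every nonzero finitely generated ideal $F\subseteq D$ with $F^\star=D^\star$ one has $(FT)^{\star'}=T^{\star'}$. $T$ is $(\star,\star')$-flat over $D$ if $T$ is $(\star,\star')$-linked to $D$ and $D_{Q\cap D}=T_Q$ for every quasi-$\star'_f$-prime ideal $Q$ of $T$. $T$ is $t$-flat over $(D,\star)$ if it is $(\star,t_T)$-flat over $D$, and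 $t$-flat over $D$ if it is $(t_D,t_T)$-flat over $D$. *)

(* Defs.v *)
From mathcomp Require Import all_boot all_algebra.
Set Implicit Arguments.
Unset Strict Implicit.
Unset Printing Implicit Defensive.
Import GRing.Theory.
Local Open Scope ring_scope.

(* Everything lives inside a fixed field K, the quotient field of D. A semistar operation is a map on
   predicates whose axioms are required on F-bar(R) only. *)

Section Defs.
Variable K : fieldType.

Definition subset (A B : K -> Prop) := forall x, A x -> B x.
Definition seteq (A B : K -> Prop) := forall x, A x <-> B x.
Definition inter (A B : K -> Prop) := fun x => A x /\ B x.

Definition subring (R : K -> Prop) :=
  [/\ R 0, R 1, (forall x y, R x -> R y -> R (x - y))
    & (forall x y, R x -> R y -> R (x * y))].

Definition is_quotient_field_of (D : K -> Prop) :=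
  forall x : K, exists a b, [/\ D a, D b, b != 0 & x = a / b].

Definition overring (D T : K -> Prop) := subring T /\ subset D T.

Definition submodule (R E : K -> Prop) :=
  [/\ E 0, (forall x y, E x -> E y -> E (x + y))
    & (forall r x, R r -> E x -> E (r * x))].
Definition nonzero (E : K -> Prop) := exists x, E x /\ x != 0.
Definition Fbar (R E : K -> Prop) := submodule R E /\ nonzero E.

Fixpoint span (R : K -> Prop) (s : seq K) : K -> Prop :=
  match s with
  | [::] => fun x => x = 0
  | a :: s' => fun x => exists r y, [/\ R r, span R s' y & x = r * a + y]
  end.
Definition fin_gen (R E : K -> Prop) := exists s, seteq E (span R s).
Definition ffg (R E : K -> Prop) := Fbar R E /\ fin_gen R E.

Definition scale (x : K) (E : K -> Prop) := fun y => exists e, E e /\ y = x * e.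

Definition semistar (R : K -> Prop) (st : (K -> Prop) -> (K -> Prop)) :=
  [/\ (forall E, Fbar R E -> Fbar R (st E)),
      (forall x E, x != 0 -> Fbar R E -> seteq (st (scale x E)) (scale x (st E))),
      (forall E F, Fbar R E -> Fbar R F -> subset E F -> subset (st E) (st F))
    & (forall E, Fbar R E -> subset E (st E) /\ seteq (st (st E)) (st E))].

Definition star_f (R : K -> Prop) (st : (K -> Prop) -> (K -> Prop)) :=
  fun E => fun x => exists F, [/\ ffg R F, subset F E & st F x].

Definition le_star (R : K -> Prop) (st1 st2 : (K -> Prop) -> (K -> Prop)) :=
  forall E, Fbar R E -> subset (st1 E) (st2 E).

Definition ideal (R I : K -> Prop) := submodule R I /\ subset I R.
Definition prime_ideal (R P : K -> Prop) :=
  [/\ ideal R P, exists x, R x /\ ~ P x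
    & forall x y, R x -> R y -> P (x * y) -> P x \/ P y].
Definition quasi_ideal (R : K -> Prop) st (I : K -> Prop) :=
  [/\ ideal R I, nonzero I & seteq (inter (st I) R) I].
Definition quasi_prime (R : K -> Prop) st (P : K -> Prop) :=
  quasi_ideal R st P /\ prime_ideal R P.

Definition extend (T F : K -> Prop) := fun x =>
  exists s : seq (K * K), (forall p, p \in s -> F p.1 /\ T p.2) /\
                          x = \sum_(p <- s) p.1 * p.2.

Definition loc (R P : K -> Prop) := fun x =>
  exists a b, [/\ R a, R b, ~ P b & x = a / b].

Definition linked (D T : K -> Prop) st st' :=
  forall F, ideal D F -> nonzero F -> fin_gen D F ->
    seteq (st F) (st D) -> seteq (st' (extend T F)) (st' T).

Definition flat (D T : K -> Prop) st st' :=
  linked D T st st' /\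
  forall Q, quasi_prime T (star_f T st') Q -> seteq (loc D (inter Q D)) (loc T Q).

Definition colon (T E : K -> Prop) := fun x => forall e, E e -> T (x * e).
Definition vop (T : K -> Prop) := fun E => colon T (colon T E).
Definition top (T : K -> Prop) := star_f T (vop T).

Definition t_flat_over (D T : K -> Prop) st := flat D T st (top T).
Definition t_flat (D T : K -> Prop) := flat D T (top D) (top T).

End Defs.

(* Main.v *)
From Pilot Require Import Defs.
From mathcomp Require Import all_boot all_algebra.
From mathcomp Require Import ring.
From mathcomp Require classical_sets.
From Stdlib Require Import Classical FunctionalExtensionality PropExtensionality.
Import Pilot.Defs.
Set Implicit Arguments.
Unset Strict Implicit.
Import GRing.Theory.
Local Open Scope ring_scope.

Section Main.
Variable K : fieldType.
Implicit Types (R T D S E F G : K -> Prop).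

Lemma sr0 R : subring R -> R 0. Proof. by case. Qed.
Lemma sr1 R : subring R -> R 1. Proof. by case. Qed.
Lemma srB R x y : subring R -> R x -> R y -> R (x - y). Proof. by case=> _ _ H _; apply: H. Qed.
Lemma srM R x y : subring R -> R x -> R y -> R (x * y). Proof. by case=> _ _ _ H; apply: H. Qed.
Lemma srN R x : subring R -> R x -> R (- x).
Proof. move=> HR Hx; rewrite -sub0r; apply: srB => //; exact: sr0. Qed.
Lemma srD R x y : subring R -> R x -> R y -> R (x + y).
Proof. move=> HR Hx Hy; rewrite -[y]opprK; apply: srB => //; exact: srN. Qed.

Lemma mod0 R E : submodule R E -> E 0. Proof. by case. Qed.
Lemma modD R E x y : submodule R E -> E x -> E y -> E (x + y). Proof. by case=> _ H _; apply: H. Qed.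
Lemma modM R E r x : submodule R E -> R r -> E x -> E (r * x). Proof. by case=> _ _ H; apply: H. Qed.

Lemma mod_ring R : subring R -> submodule R R.
Proof. move=> HR; split; [exact: sr0| move=> *; exact: srD | move=> *; exact: srM]. Qed.

Lemma Fbar_ring R : subring R -> Fbar R R.
Proof. move=> HR; split; first exact: mod_ring. by exists 1; split; [exact: sr1| exact: oner_neq0]. Qed.

Lemma mod_sub R T E : subset R T -> submodule T E -> submodule R E.
Proof. move=> RT [H0 HD HM]; split=> // r x Hr; apply: HM; exact: RT. Qed.

Lemma mod_one R E : subring R -> submodule R E -> E 1 -> subset R E.
Proof. move=> HR HE H1 r Hr; rewrite -[r]mulr1; exact: modM HE Hr H1. Qed.

Lemma Fbar_ideal R I : ideal R I -> nonzero I -> Fbar R I.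
Proof. by case=> H _ Hn; split. Qed.

Lemma span_mod R s : subring R -> submodule R (span R s).
Proof.
move=> HR; elim: s => [|a s [IH0 IHD IHM]] /=.
  split => //; first by move=> x y -> ->; rewrite addr0.
  by move=> r x _ ->; rewrite mulr0.
split.
- exists 0, 0; split => //; [exact: sr0 | by rewrite mul0r addr0].
- move=> x y [r1 [y1 [Hr1 Hy1 ->]]] [r2 [y2 [Hr2 Hy2 ->]]].
  exists (r1 + r2), (y1 + y2); split; [exact: srD | exact: IHD | ring].
- move=> r x Hr [r1 [y1 [Hr1 Hy1 ->]]].
  exists (r * r1), (r * y1); split; [exact: srM | exact: IHM | ring].
Qed.

Lemma span_in R s a : subring R -> a \in s -> span R s a.
Proof.
move=> HR; elim: s => //= b s IH; rewrite inE => /orP [/eqP -> | Ha].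
  exists 1, 0; split; [exact: sr1 | apply: mod0; exact: span_mod | ring].
exists 0, a; split; [exact: sr0 | exact: IH | ring].
Qed.

Lemma span_le R E s : subring R -> submodule R E -> (forall a, a \in s -> E a) ->
  subset (span R s) E.
Proof.
move=> HR HE; elim: s => [|a s IH] Hs x /=; first by move=> ->; exact: mod0 HE.
move=> [r [y [Hr Hy ->]]]; apply: (modD HE).
  by apply: (modM HE Hr); apply: Hs; rewrite inE eqxx.
by apply: IH => // b Hb; apply: Hs; rewrite inE Hb orbT.
Qed.

Lemma ffg_span R s a : subring R -> a \in s -> a != 0 -> ffg R (span R s).
Proof.
move=> HR Ha Hn; split; last by exists s.
split; first exact: span_mod.
by exists a; split => //; exact: span_in.
Qed.

Lemma Fbar_seteq R E F : seteq E F -> Fbar R E -> Fbar R F.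
Proof.
move=> EF [[H0 HD HM] [x [Hx Hn]]]; split; last by exists x; split => //; apply/EF.
split; first by apply/EF.
- by move=> a b /EF Ha /EF Hb; apply/EF; apply: HD.
- by move=> r a Hr /EF Ha; apply/EF; apply: HM.
Qed.

Lemma ffg_ring R : subring R -> ffg R R.
Proof.
move=> HR; split; first exact: Fbar_ring.
exists [:: 1] => x /=; split.
  by move=> Hx; exists x, 0; split => //; rewrite mulr1 addr0.
by move=> [r [y [Hr -> ->]]]; rewrite mulr1 addr0.
Qed.

Section St.
Variables (R : K -> Prop) (st : (K -> Prop) -> (K -> Prop)).
Hypothesis HR : subring R.
Hypothesis Hst : semistar R st.

Lemma st_Fbar E : Fbar R E -> Fbar R (st E). Proof. by case: Hst => H _ _ _; apply: H. Qed.
Lemma st_mono E F : Fbar R E -> Fbar R F -> subset E F -> subset (st E) (st F).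
Proof. by case: Hst => _ _ H _; apply: H. Qed.
Lemma st_ext E : Fbar R E -> subset E (st E). Proof. by case: Hst => _ _ _ H /H []. Qed.
Lemma st_idem E : Fbar R E -> subset (st (st E)) (st E).
Proof. by case: Hst => _ _ _ H /H [_ H2] x /H2. Qed.
Lemma st_scale x E : x != 0 -> Fbar R E -> seteq (st (scale x E)) (scale x (st E)).
Proof. by case: Hst => _ H _ _; apply: H. Qed.
Lemma st_mod E : Fbar R E -> submodule R (st E). Proof. by move/st_Fbar => []. Qed.

Lemma st_one E : Fbar R E -> st E 1 -> subset (st R) (st E).
Proof.
move=> FE H1 x Hx; apply: st_idem => //; apply: (st_mono (Fbar_ring HR)) => //.
  exact: st_Fbar.
exact: mod_one (st_mod FE) H1.
Qed.

Lemma st_seteq E F : Fbar R E -> Fbar R F -> seteq E F -> seteq (st E) (st F).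
Proof.
move=> FE FF EF x; split; apply: st_mono => // y; by move/EF.
Qed.

Lemma starf_ffg E : ffg R E -> seteq (star_f R st E) (st E).
Proof.
move=> [FE GE] x; split; last by move=> Hx; exists E; split.
move=> [G [[FG _] GE' Hx]]; exact: st_mono GE' _ Hx.
Qed.
End St.

Lemma Fbar_scale R y E : subring R -> y != 0 -> Fbar R E -> Fbar R (scale y E).
Proof.
move=> HR Hy [[H0 HD HM] [e [He Hn]]]; split; last first.
  by exists (y * e); split; [exists e | rewrite mulf_neq0].
split.
- by exists 0; split => //; rewrite mulr0.
- by move=> a b [a' [Ha ->]] [b' [Hb ->]]; exists (a' + b'); split; [apply: HD | ring].
- by move=> r a Hr [a' [Ha ->]]; exists (r * a'); split; [apply: HM | ring].
Qed.

Lemma span_scale R s y g : span R s g -> span R (map (fun a => y * a) s) (y * g).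
Proof.
elim: s g => [|a s IH] g /=; first by move=> ->; rewrite mulr0.
move=> [r [z [Hr Hz ->]]]; exists r, (y * z); split => //; first exact: IH.
ring.
Qed.

End Main.

Section B.
Variable K : fieldType.
Implicit Types (R T D S E F G : K -> Prop).

Lemma extend_span R T F s : subring R -> subring T -> subset R T -> seteq F (span R s) ->
  seteq (extend T F) (span T s).
Proof.
move=> HR HT RT FS x; split.
  move=> [l [Hl ->]]; elim: l Hl => [|p l IH] Hl; first by rewrite big_nil; apply: mod0; exact: span_mod.
  rewrite big_cons; apply: (modD (span_mod s HT)); last first.
    by apply: IH => q Hq; apply: Hl; rewrite inE Hq orbT.
  have [Fp Tp] := Hl p (mem_head _ _).
  rewrite mulrC; apply: (modM (span_mod s HT)) => //.
  apply: (span_le HR (mod_sub RT (span_mod s HT))); last exact/FS.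
  by move=> a Ha; apply: span_in.
have : forall a, a \in s -> F a by move=> a Ha; apply/FS; apply: span_in.
elim: s x {FS} => [|a s IH] x Hs /=.
  by move=> ->; exists [::]; rewrite big_nil.
move=> [r [y [Hr Hy ->]]].
have [|l [Hl ->]] := IH y _ Hy; first by move=> b Hb; apply: Hs; rewrite inE Hb orbT.
exists ((a, r) :: l); split; last by rewrite big_cons /= mulrC.
move=> p; rewrite inE => /orP [/eqP -> | Hp]; last exact: Hl.
by split => //; apply: Hs; rewrite inE eqxx.
Qed.

Lemma extend_le S Q F : submodule S Q -> subset F Q -> subset (extend S F) Q.
Proof.
move=> HQ FQ x [l [Hl ->]]; elim: l Hl => [|p l IH] Hl; first by rewrite big_nil; exact: mod0 HQ.
rewrite big_cons; apply: (modD HQ); last by apply: IH => q Hq; apply: Hl; rewrite inE Hq orbT.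
have [Fp Tp] := Hl p (mem_head _ _).
by rewrite mulrC; apply: (modM HQ) => //; apply: FQ.
Qed.

Lemma extend_in T F f : subring T -> F f -> extend T F f.
Proof.
move=> HT Ff; exists [:: (f, 1)]; split; last by rewrite big_cons big_nil mulr1 addr0.
by move=> p; rewrite inE => /eqP -> /=; split => //; exact: sr1.
Qed.

Lemma vop_semistar T : subring T -> semistar T (vop T).
Proof.
move=> HT.
have ext : forall E, subset E (vop T E).
  by move=> E e He y Hy; rewrite mulrC; apply: Hy.
have mono : forall E F, subset E F -> subset (vop T E) (vop T F).
  by move=> E F EF x Hx y Hy; apply: Hx => e He; apply: Hy; apply: EF.
split.
- move=> E [HE [e [He Hn]]]; split; last by exists e; split => //; apply: ext.
  split.
  + by move=> y _; rewrite mul0r; exact: sr0.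
  + by move=> a b Ha Hb y Hy; rewrite mulrDl; apply: srD => //; [apply: Ha|apply: Hb].
  + by move=> r a Hr Ha y Hy; rewrite -mulrA; apply: srM => //; apply: Ha.
- move=> x E Hx _ z; split.
    move=> Hz; exists (z / x); split; last by field.
    move=> y Hy; have := Hz (y / x).
    have -> : z / x * y = z * (y / x) by field.
    apply => w [e [He ->]].
    have -> : y / x * (x * e) = y * e by field.
    exact: Hy.
  move=> [w [Hw ->]] y Hy.
  have -> : x * w * y = w * (y * x) by ring.
  apply: Hw => e He; rewrite -mulrA; apply: Hy; by exists e.
- by move=> E F _ _; apply: mono.
- move=> E _; split; first exact: ext.
  move=> z; split; last by apply: ext.
  move=> Hz y Hy; apply: Hz => w Hw; rewrite mulrC; exact: Hw.
Qed.

Lemma top_full R F : subring R -> subset F R -> ffg R F ->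
  (forall y, colon R F y -> R y) -> seteq (top R F) (top R R).
Proof.
move=> HR FR ffgF Hcol x; split.
  move=> [G [ffgG GF Hx]]; exists G; split => // g /GF; exact: FR.
move=> [G [ffgG GR Hx]]; exists F; split => //.
move=> y Hy; apply: Hx => g Hg; apply: srM (GR _ Hg) => //; exact: Hcol.
Qed.

Lemma quasi_prime_eq R c1 c2 M : (forall E, seteq (c1 E) (c2 E)) ->
  quasi_prime R c1 M -> quasi_prime R c2 M.
Proof.
move=> H [[HI Hn Hq] Hp]; split => //; split => // x; split.
  by move=> [H1 H2]; apply/Hq; split => //; apply/H.
by move/Hq => [H1 H2]; split => //; apply/H.
Qed.

Lemma starf_top T E : seteq (star_f T (top T) E) (top T E).
Proof.
move=> x; split.
  move=> [F [ffgF FE [G [ffgG GF Hx]]]]; exists G; split => // g /GF; exact: FE.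
move=> [G [ffgG GE Hx]]; exists G; split => //; exists G; split => //.
Qed.

End B.

Lemma zorn_wrap (T:Type) (P : (T->Prop)->Prop) (A0 : T -> Prop) :
 (exists x, A0 x) -> P A0 ->
 (forall F : (T->Prop)->Prop, (exists A, F A) -> (forall A, F A -> P A) ->
   (forall A B, F A -> F B -> (forall x, A x -> B x) \/ (forall x, B x -> A x)) ->
   P (fun x => exists2 A, F A & A x)) ->
 exists M, P M /\ forall B, (forall x, M x -> B x) -> P B -> forall x, B x -> M x.
Proof.
move=> [x0 Ax0] PA0 Hch.
pose Q := fun A : T -> Prop => P A \/ (forall x, ~ A x).
have [] := @classical_sets.Zorn_bigcup T Q.
  move=> F FQ Ftot.
  case: (classic (exists A, F A /\ P A)) => [[A [FA PA]]|none].
    left.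
    have -> : classical_sets.bigcup F (fun X => X) =
              (fun x => exists2 A, (fun A => F A /\ P A) A & A x).
      apply: functional_extensionality => x; apply: propositional_extensionality.
      split.
        case=> B FB Bx; exists B => //; split => //.
        by case: (FQ _ FB) => // /(_ x).
      by case=> B [FB _] Bx; exists B.
    apply: Hch.
    - by exists A.
    - by move=> B [].
    - by move=> B C [FB _] [FC _]; case: (Ftot B C FB FC) => H; [left|right].
  right => x [B FB Bx].
  case: (FQ _ FB) => [PB|]; last by move/(_ x).
  by apply: none; exists B.
move=> A [QA Amax].
have PA : P A.
  case: QA => // Aempty; exfalso; apply: (Amax A0).
    split; first by move=> x /Aempty.
    by move=> /(_ x0 Ax0) /Aempty.
  by left.
exists A; split => // B AB PB x Bx.
apply: NNPP => nAx; apply: (Amax B); last by left.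
split => // BA; exact: nAx (BA x Bx).
Qed.

Section C.
Variable K : fieldType.
Implicit Types (R T D S E F G : K -> Prop).

Lemma exists_qprime R st I : subring R -> semistar R st -> ideal R I -> nonzero I ->
  ~ star_f R st I 1 -> exists M, quasi_prime R (star_f R st) M /\ subset I M.
Proof.
move=> HR Hst idI nzI nI1.
pose c := star_f R st.
pose P := fun J => [/\ ideal R J, subset I J & ~ c J 1].
have [] := @zorn_wrap K P I.
- by case: nzI => x [Hx _]; exists x.
- by split.
- move=> Fm [A0 FA0] FP Ftot.
  pose U := fun x => exists2 A, Fm A & A x.
  have Uin : forall A x, Fm A -> A x -> U x by move=> A x ? ?; exists A.
  split.
  + split; last by move=> x [A /FP [[_ AR] _ _] /AR].
    split.
    * by apply: (Uin A0) => //; case: (FP _ FA0) => [[H _] _ _]; exact: mod0 H.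
    * move=> x y [A FA Ax] [B FB By].
      case: (Ftot A B FA FB) => [AB|BA].
        apply: (Uin B) => //; case: (FP _ FB) => [[H _] _ _]; apply: (modD H) => //; exact: AB.
      apply: (Uin A) => //; case: (FP _ FA) => [[H _] _ _]; apply: (modD H) => //; exact: BA.
    * move=> r x Hr [A FA Ax]; apply: (Uin A) => //.
      by case: (FP _ FA) => [[H _] _ _]; apply: (modM H).
  + by move=> x Ix; apply: (Uin A0) => //; case: (FP _ FA0) => _ H _; apply: H.
  + move=> [G [[FbG [s Gs]] GU Hst1]].
    have sU : forall a, a \in s -> U a.
      by move=> a Ha; apply: GU; apply/Gs; apply: span_in => //.
    have [A [FA As]] : exists A, Fm A /\ forall a, a \in s -> A a.
      elim: s {Gs} sU => [|a s IH] sU; first by exists A0.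
      have [B FB Ba] := sU a (mem_head _ _).
      have [A [FA As]] := IH (fun b Hb => sU b (introT orP (or_intror Hb))).
      case: (Ftot A B FA FB) => [AB|BA].
        exists B; split => // b; rewrite inE => /orP [/eqP -> //| Hb]; exact: AB (As _ Hb).
      exists A; split => // b; rewrite inE => /orP [/eqP -> | Hb]; [exact: BA | exact: As].
    case: (FP _ FA) => [[HA _] _ nA]; apply: nA.
    exists G; split => //; first by split => //; exists s.
    move=> x /Gs; apply: span_le => //.
move=> M [[idM IM nM] Mmax].
have HM := idM; case: HM => [modM' MR].
have ext : forall x, R x -> ~ M x ->
    c (fun z => exists m t, [/\ M m, R t & z = m + x * t]) 1.
  move=> x Rx nMx; apply: NNPP => h.
  pose B := fun z => exists m t, [/\ M m, R t & z = m + x * t].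
  have MB : forall z, M z -> B z.
    by move=> z Mz; exists z, 0; split => //; [exact: sr0 | ring].
  apply: nMx; apply: (Mmax B MB); last first.
    by exists 0, 1; split => //; [exact: mod0 modM' | exact: sr1 | ring].
  split => //; last by move=> z /IM /MB.
  split.
  - split.
    + exact: MB (mod0 modM').
    + move=> a b [m1 [t1 [Hm1 Ht1 ->]]] [m2 [t2 [Hm2 Ht2 ->]]].
      exists (m1 + m2), (t1 + t2); split; [exact: modD modM' Hm1 Hm2 | exact: srD | ring].
    + move=> r a Hr [m1 [t1 [Hm1 Ht1 ->]]].
      exists (r * m1), (r * t1); split; [exact: modM modM' Hr Hm1 | exact: srM | ring].
  - move=> a [m1 [t1 [Hm1 Ht1 ->]]]; apply: srD => //; [exact: MR | exact: srM].
have [i0 [Ii0 i0n]] := nzI.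
have Mc : subset M (c M).
  move=> m Mm; exists (span R [:: i0; m]); split.
  - by apply: (ffg_span (a := i0)); rewrite ?inE ?eqxx.
  - apply: span_le => // a; rewrite !inE => /orP [/eqP -> | /eqP ->] //; exact: IM.
  - apply: (st_ext Hst); first by case: (ffg_span (s := [:: i0; m]) HR (mem_head _ _) i0n).
    by apply: span_in => //; rewrite !inE eqxx orbT.
have quasi : seteq (inter (c M) R) M.
  move=> x; split; last by move=> Mx; split; [exact: Mc | exact: MR].
  move=> [cMx Rx]; apply: NNPP => nMx.
  have [G [[FbG [s Gs]] GB stG1]] := ext x Rx nMx.
  have [F [[FbF [sF Fs]] FM stFx]] := cMx.
  have HH : exists ms : seq K, (forall m, m \in ms -> M m) /\
      forall a, a \in s -> exists m t, [/\ m \in ms, R t & a = m + x * t].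
    have : forall a, a \in s -> exists m t, [/\ M m, R t & a = m + x * t].
      by move=> a Ha; apply: GB; apply/Gs; apply: span_in => //.
    elim: s {Gs GB} => [|a s IH] Hs; first by exists [::].
    have [|ms [msM msP]] := IH; first by move=> b Hb; apply: Hs; rewrite inE Hb orbT.
    have [m [t [Mm Rt ->]]] := Hs a (mem_head _ _).
    exists (m :: ms); split.
      by move=> m'; rewrite inE => /orP [/eqP -> //| ]; apply: msM.
    move=> b; rewrite inE => /orP [/eqP -> | Hb].
      by exists m, t; split => //; rewrite inE eqxx.
    have [m' [t' [Hm' Ht' ->]]] := msP b Hb.
    by exists m', t'; split => //; rewrite inE Hm' orbT.
  have [ms [msM msP]] := HH.
  have [f0 [Ff0 f0n]] := FbF.2.
  pose H := span R (f0 :: sF ++ ms).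
  have ffgH : ffg R H by apply: (ffg_span (a := f0)); rewrite ?inE ?eqxx.
  have FbH : Fbar R H by case: ffgH.
  have HM' : subset H M.
    apply: span_le => // a; rewrite inE => /orP [/eqP -> | ]; first exact: FM.
    rewrite mem_cat => /orP [Ha | Ha]; last exact: msM.
    by apply: FM; apply/Fs; apply: span_in => //.
  have FH : subset F H.
    move=> y /Fs; apply: span_le; first by [].
      exact: span_mod.
    by move=> a Ha; apply: span_in => //; rewrite inE mem_cat Ha orbT.
  have stHx : st H x by apply: (st_mono Hst FbF FbH FH).
  have GH : subset G (st H).
    move=> y /Gs; apply: span_le => //; first exact: (st_mod Hst FbH).
    move=> a Ha; have [m [t [Hm Rt ->]]] := msP a Ha.
    apply: (modD (st_mod Hst FbH)).
      apply: (st_ext Hst FbH); apply: span_in => //; rewrite inE mem_cat Hm !orbT //.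
    by rewrite mulrC; apply: (modM (st_mod Hst FbH)).
  apply: nM; exists H; split => //.
  apply: (st_idem Hst FbH); apply: (st_mono Hst FbG _ GH) => //.
  exact: (st_Fbar Hst FbH).
exists M; split => //; split.
  split => //; by [exists i0; split => //; exact: IM].
split => //.
  exists 1; split; first exact: sr1.
  by move/Mc.
move=> x y Rx Ry Mxy.
case: (classic (M x)) => [|nMx]; first by left.
case: (classic (M y)) => [|nMy]; first by right.
exfalso.
have [G [[FbG [s Gs]] GB stG1]] := ext x Rx nMx.
have yn : y != 0 by apply/eqP => y0; apply: nMy; rewrite y0; exact: mod0 modM'.
pose H := span R (map (fun a => y * a) s).
have FbG' : Fbar R (scale y G) by apply: Fbar_scale.
have G'H : subset (scale y G) H by move=> z [g [/Gs Hg ->]]; apply: span_scale.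
have FbH : Fbar R H.
  split; first exact: span_mod.
  have [z [Gz zn]] := FbG'.2; exists z; split => //; exact: G'H.
have HM' : subset H M.
  apply: span_le => // z /mapP [a Ha ->].
  have [m [t [Mm Rt ->]]] := GB a (proj2 (Gs a) (span_in HR Ha)).
  have -> : y * (m + x * t) = y * m + t * (x * y) by ring.
  by apply: (modD modM'); apply: (modM modM').
have cMy : c M y.
  exists H; split => //; first by split => //; exists (map (fun a => y * a) s).
  apply: (st_mono Hst FbG' FbH G'H).
  apply/(st_scale Hst yn FbG); exists 1; split => //; by rewrite mulr1.
by apply: nMy; apply/quasi.
Qed.
End C.

Section Dsec.
Variable K : fieldType.
Implicit Types (R T D S E F G : K -> Prop).

Lemma mod_seteq R E F : seteq E F -> submodule R E -> submodule R F.
Proof.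
move=> EF [H0 HD HM]; split; first by apply/EF.
- by move=> a b /EF Ha /EF Hb; apply/EF; apply: HD.
- by move=> r a Hr /EF Ha; apply/EF; apply: HM.
Qed.

Lemma seteq_sym E F : seteq E F -> seteq F E.
Proof. by move=> H x; split => /H. Qed.

Lemma Fbar_extend R T F s : subring R -> subring T -> subset R T ->
  seteq F (span R s) -> nonzero F -> Fbar T (extend T F).
Proof.
move=> HR HT RT Fs [f [Ff fn]]; split.
  exact: mod_seteq (seteq_sym (extend_span HR HT RT Fs)) (span_mod s HT).
by exists f; split => //; apply: extend_in.
Qed.

Lemma ffg_extend R T F s : subring R -> subring T -> subset R T ->
  seteq F (span R s) -> nonzero F -> ffg T (extend T F).
Proof.
move=> HR HT RT Fs nz; split; first exact: Fbar_extend Fs nz.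
by exists s; exact: extend_span HR HT RT Fs.
Qed.

Lemma extend_subT R T F s : subring R -> subring T -> subset R T ->
  seteq F (span R s) -> subset F T -> subset (extend T F) T.
Proof.
move=> HR HT RT Fs FT x /(extend_span HR HT RT Fs).
apply: span_le => //; first exact: mod_ring.
by move=> a Ha; apply: FT; apply/Fs; apply: span_in.
Qed.

Lemma prime_facts R P : prime_ideal R P -> [/\ P 0, ~ P 1 & forall x y, R x -> R y -> ~ P x -> ~ P y -> ~ P (x * y)].
Proof.
move=> [[HP PR] [x [Rx nPx]] Hpr]; split.
- exact: mod0 HP.
- by move=> P1; apply: nPx; rewrite -[x]mulr1; apply: (modM HP).
- by move=> a b Ra Rb na nb /(Hpr a b Ra Rb) [].
Qed.

End Dsec.

Unset Implicit Arguments.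

Theorem lemma4p2 (K : fieldType) (D T S : K -> Prop) :
  subring D -> is_quotient_field_of D -> overring D T -> overring T S ->
  (* (b) *)
  (forall st st' st'', semistar D st -> semistar T st' -> semistar S st'' ->
     flat T S st' st'' -> flat D T st st' -> flat D S st st'') /\
  (* (e) *)
  (forall st1 st2 st', semistar D st1 -> semistar D st2 -> semistar T st' ->
     le_star D (star_f D st1) (star_f D st2) ->
     flat D T st2 st' -> flat D T st1 st') /\
  (* (e), "in particular" *)
  (forall st, semistar D st -> seteq (st D) D ->
     (t_flat_over D T st <-> t_flat D T)) /\
  (* (h) *)
  (forall st st' st'', semistar D st -> semistar T st' -> semistar S st'' ->
     flat D S st st'' -> (flat T S st' st'' <-> linked T S st' st'')).
Proof.
move=> HD Hq [HT DT] [HS TS].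
have DS : subset D S by move=> x /DT /TS.
split; [|split; [|split]].
-
  move=> st st' st'' Hst Hst' Hst'' [linTS flTS] [linDT flDT]; split.
  + move=> F idF nzF [s Fs] stF.
    pose G := extend T F.
    have GS : seteq G (span T s) := extend_span HD HT DT Fs.
    have FT : subset F T by move=> x /(proj2 idF) /DT.
    have FbG : Fbar T G := Fbar_extend HD HT DT Fs nzF.
    have idG : ideal T G by split; [case: FbG | exact: extend_subT Fs FT].
    have e1 := linDT F idF nzF (ex_intro _ s Fs) stF.
    have e2 := linTS G idG FbG.2 (ex_intro _ s GS) e1.
    have FbSG : Fbar S (extend S G) := Fbar_extend HT HS TS GS FbG.2.
    have FbSF : Fbar S (extend S F) := Fbar_extend HD HS DS Fs nzF.
    have eqSG : seteq (extend S F) (extend S G).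
      move=> x; split.
        by move/(extend_span HD HS DS Fs)/(extend_span HT HS TS GS).
      by move/(extend_span HT HS TS GS)/(extend_span HD HS DS Fs).
    have e3 := st_seteq Hst'' FbSF FbSG eqSG.
    by move=> x; split => [/e3/e2|/e2/e3].
  + move=> Q hQ.
    have eqT := flTS Q hQ.
    have [[idQ nzQ qQ] prQ] := hQ.
    have [Q0 nQ1 primeQ] := prime_facts prQ.
    have [modQ QS] := idQ.
    pose P := inter Q T.
    have idP : ideal T P.
      split; last by move=> x [].
      split.
      * by split; [exact: mod0 modQ | exact: sr0].
      * by move=> a b [Qa Ta] [Qb Tb]; split; [exact: modD modQ Qa Qb | exact: srD].
      * by move=> r a Tr [Qa Ta]; split; [exact: modM modQ (TS _ Tr) Qa | exact: srM].
    have nzP : nonzero P.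
      have [q [Qq qn]] := nzQ.
      have [a [b [Da Db bn eq]]] := Hq q.
      exists a; split.
        split; last exact: DT.
        have -> : a = b * q by rewrite eq; field.
        exact: modM modQ (DS _ Db) Qq.
      by apply: contra qn => /eqP a0; rewrite eq a0 mul0r.
    have nP1 : ~ star_f T st' P 1.
      move=> [G [[FbG [s Gs]] GP stG1]].
      have GT : subset G T by move=> g /GP [].
      have idG : ideal T G by split; [case: FbG | ].
      have eqG : seteq (st' G) (st' T).
        move=> z; split; first by apply: (st_mono Hst' FbG (Fbar_ring HT) GT).
        exact: (st_one HT Hst' FbG stG1).
      have h := linTS G idG FbG.2 (ex_intro _ s Gs) eqG.
      have ffgGS : ffg S (extend S G) := ffg_extend HT HS TS Gs FbG.2.
      have GSQ : subset (extend S G) Q.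
        by apply: extend_le modQ _ => g /GP [].
      apply: nQ1; apply/qQ; split; last exact: sr1.
      exists (extend S G); split => //; apply/h.
      apply: (st_ext Hst'' (Fbar_ring HS)); exact: sr1.
    have [M [hM PM]] := exists_qprime HT Hst' idP nzP nP1.
    have eqD := flDT M hM.
    have [[[modM MT] _ _] prM] := hM.
    have [M0 nM1 primeM] := prime_facts prM.
    have locTM : forall t, T t -> loc T M t.
      by move=> t Tt; exists t, 1; split => //; [exact: sr1 | by rewrite divr1].
    move=> z; split.
      move=> [a [b [Da Db nb ->]]]; exists a, b; split; [exact: DS|exact: DS| |by []].
      by move=> Qb; apply: nb; split.
    move=> /eqT [a [b [Ta Tb nb ->]]].
    have nQb : ~ Q b by move=> Qb; apply: nb; split.
    have [a1 [d1 [Da1 Dd1 nd1 ea]]] := proj2 (eqD a) (locTM a Ta).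
    have [c [d [Dc Dd nd eb]]] := proj2 (eqD b) (locTM b Tb).
    have nMd1 : ~ M d1 by move=> h; apply: nd1; split.
    have nMd : ~ M d by move=> h; apply: nd; split.
    have nQd1 : ~ Q d1 by move=> h; apply: nMd1; apply: PM; split => //; exact: DT.
    have nQd : ~ Q d by move=> h; apply: nMd; apply: PM; split => //; exact: DT.
    have bn : b != 0 by apply/eqP => b0; apply: nQb; rewrite b0.
    have dn : d != 0 by apply/eqP => d0; apply: nMd; rewrite d0.
    have d1n : d1 != 0 by apply/eqP => d0; apply: nMd1; rewrite d0.
    have ec : c = b * d by rewrite eb; field.
    have nQc : ~ Q c.
      by rewrite ec; exact: primeQ (TS _ Tb) (DS _ Dd) nQb nQd.
    have nQcd1 : ~ Q (c * d1).
      exact: primeQ (DS _ Dc) (DS _ Dd1) nQc nQd1.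
    have cn : c != 0 by rewrite ec mulf_neq0.
    exists (a1 * d), (c * d1); split; [exact: srM | exact: srM | by move=> [/nQcd1] | ].
    by rewrite ea eb; field; rewrite d1n cn dn.
-
  move=> st1 st2 st' Hst1 Hst2 Hst' Hle [lin fl]; split => // F idF nzF fgF eq1.
  apply: lin => //.
  have FbF := Fbar_ideal idF nzF.
  have FD : subset F D := proj2 idF.
  have h1 : st1 F 1 by apply/eq1; apply: (st_ext Hst1 (Fbar_ring HD)); exact: sr1.
  have : star_f D st2 F 1 by apply: (Hle F FbF); exists F; split => //; split.
  move=> [G [[FbG _] GF h2]].
  have h3 : st2 F 1 := st_mono Hst2 FbG FbF GF h2.
  move=> x; split; [exact: (st_mono Hst2 FbF (Fbar_ring HD) FD) | exact: (st_one HD Hst2 FbF h3)].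
-
  move=> st Hst eqDst; split.
  + move=> [lin fl]; split => //.
    move=> F idF nzF [s Fs] eqt.
    have hcol : forall y, colon D F y -> D y.
      have : top D F 1.
        apply/eqt; exists D; split; [exact: ffg_ring | by [] | ].
        move=> y Hy; rewrite mul1r; have := Hy 1 (sr1 HD); by rewrite mulr1.
      move=> [G [_ GF HG]] y Hy; rewrite -[y]mul1r; apply: HG => g /GF; exact: Hy.
    have FT : subset F T by move=> x /(proj2 idF) /DT.
    apply: (top_full HT (extend_subT HD HT DT Fs FT) (ffg_extend HD HT DT Fs nzF)).
    move=> y Hy; apply: NNPP => nTy.
    pose I := fun t => T t /\ T (t * y).
    have idI : ideal T I.
      rewrite /I.
      split; last by move=> x [].
      split.
      * by split; [exact: sr0 | rewrite mul0r; exact: sr0].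
      * by move=> a b [Ta Tay] [Tb Tby]; split; [exact: srD | rewrite mulrDl; exact: srD].
      * by move=> r a Tr [Ta Tay]; split; [exact: srM | rewrite -mulrA; exact: srM].
    have nzI : nonzero I.
      have [a [b [Da Db bn ey]]] := Hq y.
      exists b; split => //; split; first exact: DT.
      by rewrite ey (_ : b * (a / b) = a); [exact: DT | field].
    have nI1 : ~ top T I 1.
      move=> [G [_ GI HG]]; apply: nTy; rewrite -[y]mul1r; apply: HG => g /GI [_ h].
      by rewrite mulrC.
    have [M [hM0 IM]] := exists_qprime HT (vop_semistar HT) idI nzI nI1.
    have hM : quasi_prime T (star_f T (top T)) M.
      by apply: quasi_prime_eq hM0 => E; apply: seteq_sym; apply: starf_top.
    have eqM := fl M hM.
    have [_ prM] := hM.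
    have [M0 nM1 primeM] := prime_facts prM.
    have locTM : forall t, T t -> loc T M t.
      by move=> t Tt; exists t, 1; split => //; [exact: sr1 | by rewrite divr1].
    have hs : forall a, a \in s -> loc D (inter M D) (y * a).
      move=> a Ha; apply/eqM; apply: locTM; apply: Hy; apply: extend_in => //.
      by apply/Fs; apply: span_in.
    have [u [Du nMu Hu]] : exists u, [/\ D u, ~ M u & forall a, a \in s -> D (u * y * a)].
      elim: s {Fs} hs => [|a s IH] hs.
        by exists 1; split => //; exact: sr1 HD.
      have [|u [Du nMu Hu]] := IH; first by move=> b Hb; apply: hs; rewrite inE Hb orbT.
      have [c [d [Dc Dd nd ec]]] := hs a (mem_head _ _).
      have nMd : ~ M d by move=> h; apply: nd; split.
      have dn : d != 0 by apply/eqP => d0; apply: nMd; rewrite d0.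
      exists (d * u); split; [exact: srM | exact: primeM (DT _ Dd) (DT _ Du) nMd nMu | ].
      move=> b; rewrite inE => /orP [/eqP -> | Hb].
        have -> : d * u * y * a = u * (d * (y * a)) by ring.
        rewrite ec (_ : d * (c / d) = c); [exact: srM | by field].
      have -> : d * u * y * b = d * (u * y * b) by ring.
      exact: srM Dd (Hu b Hb).
    have un : u != 0 by apply/eqP => u0; apply: nMu; rewrite u0.
    have modE : submodule D (fun f => D (u * y * f)).
      split.
      * by rewrite mulr0; exact: sr0.
      * by move=> a b Ha Hb; rewrite mulrDr; exact: srD.
      * by move=> r a Hr Ha; rewrite mulrCA; exact: srM.
    have huy : D (u * y) by apply: hcol => f /Fs; apply: (span_le HD modE).
    have : loc D (inter M D) y.
      exists (u * y), u; split => //; first by move=> [].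
      by field.
    move=> /eqM [a [b [Ta Tb nMb ey]]].
    have bn : b != 0 by apply/eqP => b0; apply: nMb; rewrite b0.
    apply: nMb; apply: IM; split => //.
    by rewrite ey (_ : b * (a / b) = a); [exact: Ta | field].
  + move=> [lin fl]; split => //.
    move=> F idF nzF fgF eqF; apply: lin => //.
    have FbF := Fbar_ideal idF nzF.
    apply: (top_full HD (proj2 idF) (conj FbF fgF)).
    move=> y Hy.
    case: (eqVneq y 0) => [-> | yn]; first exact: sr0 HD.
    have h1 : st F 1 by apply/eqF; apply/eqDst; exact: sr1.
    have FbyF := Fbar_scale HD yn FbF.
    have yFD : subset (scale y F) D by move=> z [f [Ff ->]]; exact: Hy.
    have : st (scale y F) y.
      by apply/(st_scale Hst yn FbF); exists 1; split => //; rewrite mulr1.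
    by move/(st_mono Hst FbyF (Fbar_ring HD) yFD)/eqDst.
-
  move=> st st' st'' Hst Hst' Hst'' [linDS flDS]; split; first by case.
  move=> lin; split => // Q hQ.
  have eqDQ := flDS Q hQ.
  move=> z; split.
    move=> [a [b [Ta Tb nb ->]]]; exists a, b; split; [exact: TS|exact: TS| |by []].
    by move=> Qb; apply: nb; split.
  move=> /eqDQ [a [b [Da Db nb ->]]]; exists a, b; split; [exact: DT|exact: DT| |by []].
  by move=> [Qb _]; apply: nb; split.
Qed.
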